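(* Let $p+q=3$. The Hurwitz algebra $(\mathcal{G}(p,q),\bullet,N)$ is classified by the signature as follows. - It is isomorphic to the octonions $\mathbb{O}$ if $(p,q)=(3,0)$. - It is isomorphic to the split-octonions $\mathbb{O}_s$ if $(p,q)\in\{(2,1),(1,2),(0,3)\}$.
   Context: Let $p,q\ge0$ with $p+q=3$. $\mathcal{G}(p,q)$ is the real Clifford (geometric) algebra generated by an orthonormal basis $e_1,e_2,e_3$ with $e_i^2=\lambda_i\in\{\pm1\}$ (exactly $p$ of them $+1$) and $e_ie_j=-e_je_i$ for $i\neq j$. $\langle x\rangle_k$ is the grade-$k$ part. We write $x_+=\langle x\rangle_0+\langle x\rangle_2$ and $x_-=\langle x\rangle_1+\langle x\rangle_3$. Clifford conjugation $\tilde x$ multiplies grades $0,1,2,3$ by $+1,-1,-1,+1$. Full grade inversion is $x^*=2\langle x\rangle_0-x$. The product is $x\bullet y = x_+y_+ + \widetilde{y_-}x_- + y_-x_+ + x_-\widetilde{y_+}$. The quadratic form $N$ is defined by $x\bullet x^*=N(x)1$, where $x\bullet x^*$ is a real scalar. $(\mathcal{G}(p,q),\bullet,N)$ is a unital 8-dimensional algebra with nondegenerate multiplicative quadratic form $N$, i.e. a Hurwitz algebra. Hurwitz algebras are unital real algebras with a nondegenerate quadratic form $n$ satisfying $n(xy)=n(x)n(y)$; the 8-dimensional ones are $\mathbb{O}$ (octonions, the division case) and $\mathbb{O}_s$ (split-octonions). *)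

(* Defs.v *)
From HB Require Import structures.
From mathcomp Require Import all_boot all_order all_algebra.
From mathcomp Require Import reals.
Set Implicit Arguments. Unset Strict Implicit. Unset Printing Implicit Defensive.
Import Order.TTheory GRing.Theory Num.Theory.
Local Open Scope ring_scope.

Section Defs.
Variable R : realType.

Definition hurwitz_iso (U V : lmodType R)
    (mulU : U -> U -> U) (oneU : U) (nU : U -> R)
    (mulV : V -> V -> V) (oneV : V) (nV : V -> R) : Prop :=
  exists f : U -> V,
    [/\ forall (a : R) (x y : U), f (a *: x + y) = a *: f x + f y,
        bijective f,
        forall x y, f (mulU x y) = mulV (f x) (f y),
        f oneU = oneV
      & forall x, nV (f x) = nU x].

(* The Clifford algebra G(p,q): an element is a family of real coefficients *)
(* indexed by the subsets A of {e_1,e_2,e_3} (blade e_A = product of the    *)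
(* e_i, i in A, in increasing order).  lam i = e_(i+1)^2.                   *)
Local Notation cl := {ffun {set 'I_3} -> R^o}.

Definition blade (A : {set 'I_3}) : cl := [ffun B : {set 'I_3} => ((B == A)%:R : R^o)].

(* number of transpositions needed to bring e_A e_B to normal order *)
Definition cl_swaps (A B : {set 'I_3}) : nat :=
  \sum_(i < 3) \sum_(j < 3) ((i \in A) && (j \in B) && (j < i)%N : nat).

(* e_A e_B = cl_sign lam A B * e_(A symmetric-difference B) *)
Definition cl_sign (lam : 'I_3 -> R) (A B : {set 'I_3}) : R :=
  (-1) ^+ cl_swaps A B * \prod_(i in A :&: B) lam i.

Definition gp (lam : 'I_3 -> R) (x y : cl) : cl :=
  \sum_(A : {set 'I_3}) \sum_(B : {set 'I_3})
     (x A * y B * cl_sign lam A B) *: blade ((A :\: B) :|: (B :\: A)).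

Definition cl_one : cl := blade set0.

Definition grade (k : nat) (x : cl) : cl :=
  [ffun A : {set 'I_3} => if #|A| == k then x A else 0].

Definition even_part (x : cl) : cl := grade 0 x + grade 2 x.
Definition odd_part (x : cl) : cl := grade 1 x + grade 3 x.

Definition cl_conj (x : cl) : cl :=
  grade 0 x - grade 1 x - grade 2 x + grade 3 x.

Definition cl_star (x : cl) : cl := 2%:R *: grade 0 x - x.

Definition bullet (lam : 'I_3 -> R) (x y : cl) : cl :=
  gp lam (even_part x) (even_part y)
  + gp lam (cl_conj (odd_part y)) (odd_part x)
  + gp lam (odd_part y) (even_part x)
  + gp lam (odd_part x) (cl_conj (even_part y)).

(* N(x) defined by x . x^* = N(x) 1 : the scalar (grade 0) coefficient *)
Definition cl_N (lam : 'I_3 -> R) (x : cl) : R := bullet lam x (cl_star x) set0.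

Definition cd_mul (A : lmodType R) (m : A -> A -> A) (c : A -> A) (g : R)
    (x y : A * A) : A * A :=
  (m x.1 y.1 + g *: m (c y.2) x.2, m y.2 x.1 + m x.2 (c y.1)).
Definition cd_conj (A : lmodType R) (c : A -> A) (x : A * A) : A * A :=
  (c x.1, - x.2).
Definition cd_norm (A : lmodType R) (n : A -> R) (g : R) (x : A * A) : R :=
  n x.1 - g * n x.2.

Definition Rr : lmodType R := R^o.
Definition r_mul (x y : Rr) : Rr := (x : R) * (y : R).
Definition r_conj (x : Rr) : Rr := x.
Definition r_norm (x : Rr) : R := (x : R) ^+ 2.

Definition Cx : lmodType R := (Rr * Rr)%type.
Definition c_mul : Cx -> Cx -> Cx := cd_mul r_mul r_conj (-1).
Definition c_conj : Cx -> Cx := cd_conj r_conj.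
Definition c_norm : Cx -> R := cd_norm r_norm (-1).

Definition Hq : lmodType R := (Cx * Cx)%type.
Definition h_mul : Hq -> Hq -> Hq := cd_mul c_mul c_conj (-1).
Definition h_conj : Hq -> Hq := cd_conj c_conj.
Definition h_norm : Hq -> R := cd_norm c_norm (-1).

Definition Oc : lmodType R := (Hq * Hq)%type.
Definition oct_one : Oc := (((1 : Rr, 0 : Rr), (0 : Cx)), 0 : Hq).
Definition oct_mul : Oc -> Oc -> Oc := cd_mul h_mul h_conj (-1).
Definition oct_norm : Oc -> R := cd_norm h_norm (-1).
Definition soct_mul : Oc -> Oc -> Oc := cd_mul h_mul h_conj 1.
Definition soct_norm : Oc -> R := cd_norm h_norm 1.

End Defs.

(* Main.v *)
Require Import Defs.
From HB Require Import structures.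
From mathcomp Require Import all_boot all_order all_algebra.
From mathcomp Require Import reals.
From mathcomp Require Import ring lra.
Set Implicit Arguments. Unset Strict Implicit. Unset Printing Implicit Defensive.
Import Order.TTheory GRing.Theory Num.Theory.
Local Open Scope ring_scope.


Definition i0 : 'I_3 := @Ordinal 3 0 isT.
Definition i1 : 'I_3 := @Ordinal 3 1 isT.
Definition i2 : 'I_3 := @Ordinal 3 2 isT.
Definition setb (a b c : bool) : {set 'I_3} := [set i : 'I_3 | nth false [:: a; b; c] i].
Lemma in_setb a b c i : (i \in setb a b c) = nth false [:: a; b; c] i.
Proof. by rewrite inE. Qed.
Lemma setb_eq (A : {set 'I_3}) : A = setb (i0 \in A) (i1 \in A) (i2 \in A).
Proof.
apply/setP => i; rewrite in_setb.
case: i => [[|[|[|n]]] Hi] //=; congr (_ \in A); exact: val_inj.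
Qed.
Lemma card_setb a b c : #|setb a b c| = (a + b + c)%N.
Proof.
rewrite -sum1_card big_mkcond /= big_ord_recr /= big_ord_recr /= big_ord_recr /= big_ord0.
by rewrite !in_setb /=; case: a; case: b; case: c.
Qed.
Lemma eq_setb a b c a' b' c' : (setb a b c == setb a' b' c') = [&& a == a', b == b' & c == c'].
Proof.
apply/idP/idP.
  move/eqP/setP => H; have := H i0; have := H i1; have := H i2; rewrite !in_setb /=.
  by move=> -> -> ->; rewrite !eqxx.
by case/and3P => /eqP -> /eqP -> /eqP ->.
Qed.
Definition symd (A B : {set 'I_3}) := (A :\: B) :|: (B :\: A).
Lemma symd_setb a b c a' b' c' : symd (setb a b c) (setb a' b' c') = setb (a (+) a') (b (+) b') (c (+) c').
Proof.
apply/setP => i; rewrite !(in_setU, in_setD, in_setI) !in_setb.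
by case: i => [[|[|[|n]]] Hi] //=; case: a; case: a'; case: b; case: b'; case: c; case: c'.
Qed.
Lemma setI_setb a b c a' b' c' : setb a b c :&: setb a' b' c' = setb (a && a') (b && b') (c && c').
Proof.
apply/setP => i; rewrite !(in_setU, in_setD, in_setI) !in_setb.
by case: i => [[|[|[|n]]] Hi] //=.
Qed.
Lemma swaps_setb a b c a' b' c' : cl_swaps (setb a b c) (setb a' b' c') = ((b && a') + (c && a') + (c && b'))%N.
Proof.
rewrite /cl_swaps !big_ord_recr !big_ord0 /= !in_setb /=.
by case: a; case: a'; case: b; case: b'; case: c; case: c'.
Qed.
Lemma prod_setb (R : comRingType) (lam : 'I_3 -> R) a b c :
  \prod_(i in setb a b c) lam i = (if a then lam i0 else 1) * (if b then lam i1 else 1) * (if c then lam i2 else 1).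
Proof.
rewrite big_mkcond /= !big_ord_recr big_ord0 /= !in_setb /= mul1r.
have E0 : widen_ord (leqnSn 2) (widen_ord (leqnSn 1) ord_max) = i0 by apply: val_inj.
have E1 : widen_ord (leqnSn 2) ord_max = i1 by apply: val_inj.
have E2 : (ord_max : 'I_3) = i2 by apply: val_inj.
by rewrite E0 E1 E2.
Qed.
Lemma set3_ind (P : {set 'I_3} -> Prop) :
  (forall a b c, P (setb a b c)) -> forall A, P A.
Proof. by move=> H A; rewrite (setb_eq A). Qed.


Section B.
Variable R : realType.
Variable lam : 'I_3 -> R.
Local Notation cl := {ffun {set 'I_3} -> R^o}.

Lemma card3 (A : {set 'I_3}) : (#|A| <= 3)%N.
Proof. by have := max_card A; rewrite card_ord. Qed.

Definition csg (B : {set 'I_3}) : R := if (#|B| == 1%N) || (#|B| == 2%N) then -1 else 1.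
Definition beta (A B : {set 'I_3}) : R :=
  if odd #|A| then (if odd #|B| then csg B * cl_sign lam B A else csg B * cl_sign lam A B)
  else (if odd #|B| then cl_sign lam B A else cl_sign lam A B).

Lemma evenE (x : cl) A : even_part x A = if odd #|A| then 0 else x A.
Proof.
rewrite /even_part /grade !ffunE; have := card3 A.
by case: #|A| => [|[|[|[|n]]]] //= _; rewrite ?addr0 ?add0r.
Qed.
Lemma oddE (x : cl) A : odd_part x A = if odd #|A| then x A else 0.
Proof.
rewrite /odd_part /grade !ffunE; have := card3 A.
by case: #|A| => [|[|[|[|n]]]] //= _; rewrite ?addr0 ?add0r.
Qed.
Lemma conjE (x : cl) A : cl_conj x A = csg A * x A.
Proof.
rewrite /cl_conj /csg /grade !ffunE; have := card3 A.
by case: #|A| => [|[|[|[|n]]]] //= _; rewrite ?subr0 ?addr0 ?sub0r ?add0r ?mul1r ?mulN1r.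
Qed.
Lemma symdC A B : symd A B = symd B A.
Proof. by rewrite /symd setUC. Qed.

Lemma bulletE (x y : cl) : bullet lam x y =
  \sum_A \sum_B (x A * y B * beta A B) *: blade R (symd A B).
Proof.
rewrite /bullet /gp.
rewrite [X in _ + X + _ + _]exchange_big [X in _ + X + _]exchange_big.
rewrite -!big_split; apply: eq_bigr => A _; rewrite -!big_split; apply: eq_bigr => B _ /=.
rewrite -/(symd A B) -/(symd B A) (symdC B A).
rewrite !conjE !evenE !oddE /beta.
case: (odd #|A|); case: (odd #|B|); rewrite ?mulr0 ?mul0r ?scale0r ?add0r ?addr0;
  congr (_ *: _); ring.
Qed.

Lemma cl_decomp (x : cl) : x = \sum_A x A *: blade R A.
Proof.
apply/ffunP => C; rewrite sum_ffunE (bigD1 C) //= big1 ?addr0.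
  by rewrite !ffunE eqxx /GRing.scale /= mulr1.
by move=> A /negPf hA; rewrite !ffunE eq_sym hA /GRing.scale /= mulr0.
Qed.
End B.


Section O.
Variable R : realType.
Local Notation O := (Oc R).
Definition omul (g : R) : O -> O -> O := cd_mul (@h_mul R) (@h_conj R) g.
Definition onorm (g : R) : O -> R := cd_norm (@h_norm R) g.
Definition oconj : O -> O := cd_conj (@h_conj R).

Lemma oc_ext (u v : O) : u.1.1.1 = v.1.1.1 -> u.1.1.2 = v.1.1.2 -> u.1.2.1 = v.1.2.1 -> u.1.2.2 = v.1.2.2 ->
  u.2.1.1 = v.2.1.1 -> u.2.1.2 = v.2.1.2 -> u.2.2.1 = v.2.2.1 -> u.2.2.2 = v.2.2.2 -> u = v.
Proof.
by move: u v => [[[u1 u2][u3 u4]][[u5 u6][u7 u8]]] [[[v1 v2][v3 v4]][[v5 v6][v7 v8]]] /= -> -> -> -> -> -> -> ->.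
Qed.

Ltac oc := apply: oc_ext; rewrite /=; ring.

Lemma omulDl g a (u v w : O) : omul g (a *: u + v) w = a *: omul g u w + omul g v w.
Proof.
move: u v w => [[[u1 u2][u3 u4]][[u5 u6][u7 u8]]] [[[v1 v2][v3 v4]][[v5 v6][v7 v8]]] [[[w1 w2][w3 w4]][[w5 w6][w7 w8]]].
apply: oc_ext; rewrite /= /r_mul /r_conj /GRing.scale /=; ring.
Qed.
End O.
Section O2.
Variable R : realType.
Local Notation O := (Oc R).
Ltac oc := apply: oc_ext; rewrite /= /r_mul /r_conj /GRing.scale /=; ring.
Lemma omulDr g a (u v w : O) : omul g w (a *: u + v) = a *: omul g w u + omul g w v.
Proof.
move: u v w => [[[u1 u2][u3 u4]][[u5 u6][u7 u8]]] [[[v1 v2][v3 v4]][[v5 v6][v7 v8]]] [[[w1 w2][w3 w4]][[w5 w6][w7 w8]]].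
oc.
Qed.
Lemma omul0l g (w : O) : omul g 0 w = 0.
Proof. move: w => [[[w1 w2][w3 w4]][[w5 w6][w7 w8]]]; oc. Qed.
Lemma omul0r g (w : O) : omul g w 0 = 0.
Proof. move: w => [[[w1 w2][w3 w4]][[w5 w6][w7 w8]]]; oc. Qed.
Lemma omul_conj g (u : O) : omul g u (oconj u) = onorm g u *: oct_one R.
Proof. move: u => [[[w1 w2][w3 w4]][[w5 w6][w7 w8]]]; rewrite /onorm /cd_norm /h_norm /c_norm /cd_norm /r_norm; oc. Qed.
End O2.


Section G.
Variable R : realType.
Variable lam : 'I_3 -> R.
Variable g : R.
Local Notation cl := {ffun {set 'I_3} -> R^o}.
Local Notation O := (Oc R).
Variables (f : cl -> O) (gi : O -> cl).
Hypothesis fL : forall a x y, f (a *: x + y) = a *: f x + f y.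
Hypothesis fK : cancel f gi.
Hypothesis gK : cancel gi f.
Hypothesis f1 : f (cl_one R) = oct_one R.
Hypothesis fstar : forall x, f (cl_star x) = oconj (f x).
Hypothesis fmul : forall A B, beta lam A B *: f (blade R (symd A B)) = omul g (f (blade R A)) (f (blade R B)).

Lemma f0 : f 0 = 0.
Proof. by have := fL 1 0 0; rewrite !scale1r addr0 => /(congr1 (fun z => z - f 0)); rewrite addrK subrr => ->. Qed.
Lemma fD x y : f (x + y) = f x + f y.
Proof. by rewrite -[x in LHS]scale1r fL scale1r. Qed.
Lemma fZ a x : f (a *: x) = a *: f x.
Proof. by rewrite -[a *: x]addr0 fL f0 addr0. Qed.
Lemma f_sum I (r : seq I) (F : I -> cl) : f (\sum_(i <- r) F i) = \sum_(i <- r) f (F i).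
Proof. exact: (big_morph f fD f0). Qed.
Lemma omul_suml I (r : seq I) (F : I -> O) w : omul g (\sum_(i <- r) F i) w = \sum_(i <- r) omul g (F i) w.
Proof.
apply: (big_morph (fun u => omul g u w)) => [u v|]; last exact: omul0l.
by rewrite -[u in LHS]scale1r omulDl scale1r.
Qed.
Lemma omul_sumr I (r : seq I) (F : I -> O) w : omul g w (\sum_(i <- r) F i) = \sum_(i <- r) omul g w (F i).
Proof.
apply: (big_morph (fun u => omul g w u)) => [u v|]; last exact: omul0r.
by rewrite -[u in LHS]scale1r omulDr scale1r.
Qed.
Lemma omulZl a u w : omul g (a *: u) w = a *: omul g u w.
Proof. by rewrite -[a *: u]addr0 omulDl omul0l addr0. Qed.
Lemma omulZr a u w : omul g w (a *: u) = a *: omul g w u.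
Proof. by rewrite -[a *: u]addr0 omulDr omul0r addr0. Qed.

Lemma fmulE x y : f (bullet lam x y) = omul g (f x) (f y).
Proof.
rewrite bulletE f_sum.
transitivity (\sum_A \sum_B (x A * y B) *: omul g (f (blade R A)) (f (blade R B))).
  apply: eq_bigr => A _; rewrite f_sum; apply: eq_bigr => B _.
  by rewrite -fmul fZ scalerA.
rewrite [in RHS](cl_decomp x) [in RHS](cl_decomp y) f_sum omul_suml.
apply: eq_bigr => A _; rewrite f_sum omul_sumr; apply: eq_bigr => B _.
by rewrite !fZ omulZl omulZr scalerA mulrC.
Qed.

Lemma gen_iso : hurwitz_iso (bullet lam) (cl_one R) (cl_N lam) (omul g) (oct_one R) (onorm g).
Proof.
exists f; split => //.
- by exists gi.
- exact: fmulE.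
move=> x.
have H : bullet lam x (cl_star x) = onorm g (f x) *: cl_one R.
  apply: (can_inj fK); rewrite fmulE fstar omul_conj fZ f1 //.
rewrite /cl_N H ffunE /cl_one /blade ffunE eqxx /GRing.scale /=.
by rewrite mulr1.
Qed.
End G.


Section C.
Variable R : realType.
Local Notation cl := {ffun {set 'I_3} -> R^o}.
Lemma set0_setb : set0 = setb false false false.
Proof. by apply/setP => i; rewrite in_set0 in_setb; case: i => [[|[|[|n]]] Hi]. Qed.
Lemma starE (x : cl) A : cl_star x A = if A == setb false false false then x A else - x A.
Proof.
rewrite -set0_setb /cl_star /grade !ffunE -cards_eq0.
case: (#|A| == 0%N); rewrite /GRing.scale /=; ring.
Qed.
Definition f_ppp (x : cl) : Oc R := ((((1 * x (setb false false false), 1 * x (setb true false false)), (1 * x (setb false true false), 1 * x (setb true true false))), ((1 * x (setb false false true), 1 * x (setb true false true)), (1 * x (setb false true true), 1 * x (setb true true true)))) : Oc R).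
Definition g_ppp (u : Oc R) : cl := [ffun A : {set 'I_3} => match i0 \in A, i1 \in A, i2 \in A with
  | false, false, false => 1 * u.1.1.1
  | true, false, false => 1 * u.1.1.2
  | false, true, false => 1 * u.1.2.1
  | false, false, true => 1 * u.2.1.1
  | true, true, false => 1 * u.1.2.2
  | true, false, true => 1 * u.2.1.2
  | false, true, true => 1 * u.2.2.1
  | true, true, true => 1 * u.2.2.2
  end].
Definition img_ppp (a b c : bool) : Oc R := match a, b, c with
  | false, false, false => ((((1, 0), (0, 0)), ((0, 0), (0, 0))) : Oc R)
  | true, false, false => ((((0, 1), (0, 0)), ((0, 0), (0, 0))) : Oc R)
  | false, true, false => ((((0, 0), (1, 0)), ((0, 0), (0, 0))) : Oc R)
  | false, false, true => ((((0, 0), (0, 0)), ((1, 0), (0, 0))) : Oc R)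
  | true, true, false => ((((0, 0), (0, 1)), ((0, 0), (0, 0))) : Oc R)
  | true, false, true => ((((0, 0), (0, 0)), ((0, 1), (0, 0))) : Oc R)
  | false, true, true => ((((0, 0), (0, 0)), ((0, 0), (1, 0))) : Oc R)
  | true, true, true => ((((0, 0), (0, 0)), ((0, 0), (0, 1))) : Oc R)
  end.
Lemma fb_ppp a b c : f_ppp (blade R (setb a b c)) = img_ppp a b c.
Proof. by case: a; case: b; case: c; apply: oc_ext; rewrite /= !ffunE !eq_setb /=; ring. Qed.
Lemma iso_ppp (lam : 'I_3 -> R) : lam i0 = 1 -> lam i1 = 1 -> lam i2 = 1 ->
  hurwitz_iso (bullet lam) (cl_one R) (cl_N lam) (omul (-1)) (oct_one R) (onorm (-1)).
Proof.
move=> l0 l1 l2; apply: (@gen_iso _ _ _ (@f_ppp) (@g_ppp)).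
- by move=> a x y; apply: oc_ext; rewrite /= !ffunE /GRing.scale /=; ring.
- by move=> x; apply/ffunP; apply: set3_ind => a b c; rewrite ffunE !in_setb; case: a; case: b; case: c; rewrite /=; ring.
- by move=> [[[u1 u2][u3 u4]][[u5 u6][u7 u8]]]; apply: oc_ext; rewrite /= !ffunE !in_setb /=; ring.
- by apply: oc_ext; rewrite /= /cl_one set0_setb !ffunE !eq_setb /=; ring.
- by move=> x; apply: oc_ext; rewrite /= !starE !eq_setb /= /r_conj /=; ring.
apply: set3_ind => a b c; apply: set3_ind => a' b' c'.
rewrite symd_setb /beta /csg /cl_sign !swaps_setb !setI_setb !prod_setb !card_setb l0 l1 l2.
rewrite !fb_ppp.
case: a; case: b; case: c; case: a'; case: b'; case: c'; rewrite /=;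
  apply: oc_ext; rewrite /= /r_mul /r_conj /GRing.scale /=; ring.
Qed.

Definition f_ppm (x : cl) : Oc R := ((((1 * x (setb false false false), 1 * x (setb true false false)), (1 * x (setb false true false), 1 * x (setb true true false))), ((1 * x (setb false false true), 1 * x (setb true false true)), (1 * x (setb false true true), 1 * x (setb true true true)))) : Oc R).
Definition g_ppm (u : Oc R) : cl := [ffun A : {set 'I_3} => match i0 \in A, i1 \in A, i2 \in A with
  | false, false, false => 1 * u.1.1.1
  | true, false, false => 1 * u.1.1.2
  | false, true, false => 1 * u.1.2.1
  | false, false, true => 1 * u.2.1.1
  | true, true, false => 1 * u.1.2.2
  | true, false, true => 1 * u.2.1.2
  | false, true, true => 1 * u.2.2.1
  | true, true, true => 1 * u.2.2.2
  end].
Definition img_ppm (a b c : bool) : Oc R := match a, b, c with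
  | false, false, false => ((((1, 0), (0, 0)), ((0, 0), (0, 0))) : Oc R)
  | true, false, false => ((((0, 1), (0, 0)), ((0, 0), (0, 0))) : Oc R)
  | false, true, false => ((((0, 0), (1, 0)), ((0, 0), (0, 0))) : Oc R)
  | false, false, true => ((((0, 0), (0, 0)), ((1, 0), (0, 0))) : Oc R)
  | true, true, false => ((((0, 0), (0, 1)), ((0, 0), (0, 0))) : Oc R)
  | true, false, true => ((((0, 0), (0, 0)), ((0, 1), (0, 0))) : Oc R)
  | false, true, true => ((((0, 0), (0, 0)), ((0, 0), (1, 0))) : Oc R)
  | true, true, true => ((((0, 0), (0, 0)), ((0, 0), (0, 1))) : Oc R)
  end.
Lemma fb_ppm a b c : f_ppm (blade R (setb a b c)) = img_ppm a b c.
Proof. by case: a; case: b; case: c; apply: oc_ext; rewrite /= !ffunE !eq_setb /=; ring. Qed.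
Lemma iso_ppm (lam : 'I_3 -> R) : lam i0 = 1 -> lam i1 = 1 -> lam i2 = (-1) ->
  hurwitz_iso (bullet lam) (cl_one R) (cl_N lam) (omul 1) (oct_one R) (onorm 1).
Proof.
move=> l0 l1 l2; apply: (@gen_iso _ _ _ (@f_ppm) (@g_ppm)).
- by move=> a x y; apply: oc_ext; rewrite /= !ffunE /GRing.scale /=; ring.
- by move=> x; apply/ffunP; apply: set3_ind => a b c; rewrite ffunE !in_setb; case: a; case: b; case: c; rewrite /=; ring.
- by move=> [[[u1 u2][u3 u4]][[u5 u6][u7 u8]]]; apply: oc_ext; rewrite /= !ffunE !in_setb /=; ring.
- by apply: oc_ext; rewrite /= /cl_one set0_setb !ffunE !eq_setb /=; ring.
- by move=> x; apply: oc_ext; rewrite /= !starE !eq_setb /= /r_conj /=; ring.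
apply: set3_ind => a b c; apply: set3_ind => a' b' c'.
rewrite symd_setb /beta /csg /cl_sign !swaps_setb !setI_setb !prod_setb !card_setb l0 l1 l2.
rewrite !fb_ppm.
case: a; case: b; case: c; case: a'; case: b'; case: c'; rewrite /=;
  apply: oc_ext; rewrite /= /r_mul /r_conj /GRing.scale /=; ring.
Qed.

Definition f_pmp (x : cl) : Oc R := ((((1 * x (setb false false false), 1 * x (setb true false false)), (1 * x (setb false false true), 1 * x (setb true false true))), ((1 * x (setb false true false), 1 * x (setb true true false)), ((-1) * x (setb false true true), (-1) * x (setb true true true)))) : Oc R).
Definition g_pmp (u : Oc R) : cl := [ffun A : {set 'I_3} => match i0 \in A, i1 \in A, i2 \in A with
  | false, false, false => 1 * u.1.1.1
  | true, false, false => 1 * u.1.1.2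
  | false, true, false => 1 * u.2.1.1
  | false, false, true => 1 * u.1.2.1
  | true, true, false => 1 * u.2.1.2
  | true, false, true => 1 * u.1.2.2
  | false, true, true => (-1) * u.2.2.1
  | true, true, true => (-1) * u.2.2.2
  end].
Definition img_pmp (a b c : bool) : Oc R := match a, b, c with
  | false, false, false => ((((1, 0), (0, 0)), ((0, 0), (0, 0))) : Oc R)
  | true, false, false => ((((0, 1), (0, 0)), ((0, 0), (0, 0))) : Oc R)
  | false, true, false => ((((0, 0), (0, 0)), ((1, 0), (0, 0))) : Oc R)
  | false, false, true => ((((0, 0), (1, 0)), ((0, 0), (0, 0))) : Oc R)
  | true, true, false => ((((0, 0), (0, 0)), ((0, 1), (0, 0))) : Oc R)
  | true, false, true => ((((0, 0), (0, 1)), ((0, 0), (0, 0))) : Oc R)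
  | false, true, true => ((((0, 0), (0, 0)), ((0, 0), ((-1), 0))) : Oc R)
  | true, true, true => ((((0, 0), (0, 0)), ((0, 0), (0, (-1)))) : Oc R)
  end.
Lemma fb_pmp a b c : f_pmp (blade R (setb a b c)) = img_pmp a b c.
Proof. by case: a; case: b; case: c; apply: oc_ext; rewrite /= !ffunE !eq_setb /=; ring. Qed.
Lemma iso_pmp (lam : 'I_3 -> R) : lam i0 = 1 -> lam i1 = (-1) -> lam i2 = 1 ->
  hurwitz_iso (bullet lam) (cl_one R) (cl_N lam) (omul 1) (oct_one R) (onorm 1).
Proof.
move=> l0 l1 l2; apply: (@gen_iso _ _ _ (@f_pmp) (@g_pmp)).
- by move=> a x y; apply: oc_ext; rewrite /= !ffunE /GRing.scale /=; ring.
- by move=> x; apply/ffunP; apply: set3_ind => a b c; rewrite ffunE !in_setb; case: a; case: b; case: c; rewrite /=; ring.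
- by move=> [[[u1 u2][u3 u4]][[u5 u6][u7 u8]]]; apply: oc_ext; rewrite /= !ffunE !in_setb /=; ring.
- by apply: oc_ext; rewrite /= /cl_one set0_setb !ffunE !eq_setb /=; ring.
- by move=> x; apply: oc_ext; rewrite /= !starE !eq_setb /= /r_conj /=; ring.
apply: set3_ind => a b c; apply: set3_ind => a' b' c'.
rewrite symd_setb /beta /csg /cl_sign !swaps_setb !setI_setb !prod_setb !card_setb l0 l1 l2.
rewrite !fb_pmp.
case: a; case: b; case: c; case: a'; case: b'; case: c'; rewrite /=;
  apply: oc_ext; rewrite /= /r_mul /r_conj /GRing.scale /=; ring.
Qed.

Definition f_pmm (x : cl) : Oc R := ((((1 * x (setb false false false), 1 * x (setb true false false)), ((-1) * x (setb false true true), 1 * x (setb true true true))), ((1 * x (setb false true false), 1 * x (setb true true false)), (1 * x (setb false false true), (-1) * x (setb true false true)))) : Oc R).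
Definition g_pmm (u : Oc R) : cl := [ffun A : {set 'I_3} => match i0 \in A, i1 \in A, i2 \in A with
  | false, false, false => 1 * u.1.1.1
  | true, false, false => 1 * u.1.1.2
  | false, true, false => 1 * u.2.1.1
  | false, false, true => 1 * u.2.2.1
  | true, true, false => 1 * u.2.1.2
  | true, false, true => (-1) * u.2.2.2
  | false, true, true => (-1) * u.1.2.1
  | true, true, true => 1 * u.1.2.2
  end].
Definition img_pmm (a b c : bool) : Oc R := match a, b, c with
  | false, false, false => ((((1, 0), (0, 0)), ((0, 0), (0, 0))) : Oc R)
  | true, false, false => ((((0, 1), (0, 0)), ((0, 0), (0, 0))) : Oc R)
  | false, true, false => ((((0, 0), (0, 0)), ((1, 0), (0, 0))) : Oc R)
  | false, false, true => ((((0, 0), (0, 0)), ((0, 0), (1, 0))) : Oc R)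
  | true, true, false => ((((0, 0), (0, 0)), ((0, 1), (0, 0))) : Oc R)
  | true, false, true => ((((0, 0), (0, 0)), ((0, 0), (0, (-1)))) : Oc R)
  | false, true, true => ((((0, 0), ((-1), 0)), ((0, 0), (0, 0))) : Oc R)
  | true, true, true => ((((0, 0), (0, 1)), ((0, 0), (0, 0))) : Oc R)
  end.
Lemma fb_pmm a b c : f_pmm (blade R (setb a b c)) = img_pmm a b c.
Proof. by case: a; case: b; case: c; apply: oc_ext; rewrite /= !ffunE !eq_setb /=; ring. Qed.
Lemma iso_pmm (lam : 'I_3 -> R) : lam i0 = 1 -> lam i1 = (-1) -> lam i2 = (-1) ->
  hurwitz_iso (bullet lam) (cl_one R) (cl_N lam) (omul 1) (oct_one R) (onorm 1).
Proof.
move=> l0 l1 l2; apply: (@gen_iso _ _ _ (@f_pmm) (@g_pmm)).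
- by move=> a x y; apply: oc_ext; rewrite /= !ffunE /GRing.scale /=; ring.
- by move=> x; apply/ffunP; apply: set3_ind => a b c; rewrite ffunE !in_setb; case: a; case: b; case: c; rewrite /=; ring.
- by move=> [[[u1 u2][u3 u4]][[u5 u6][u7 u8]]]; apply: oc_ext; rewrite /= !ffunE !in_setb /=; ring.
- by apply: oc_ext; rewrite /= /cl_one set0_setb !ffunE !eq_setb /=; ring.
- by move=> x; apply: oc_ext; rewrite /= !starE !eq_setb /= /r_conj /=; ring.
apply: set3_ind => a b c; apply: set3_ind => a' b' c'.
rewrite symd_setb /beta /csg /cl_sign !swaps_setb !setI_setb !prod_setb !card_setb l0 l1 l2.
rewrite !fb_pmm.
case: a; case: b; case: c; case: a'; case: b'; case: c'; rewrite /=;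
  apply: oc_ext; rewrite /= /r_mul /r_conj /GRing.scale /=; ring.
Qed.

Definition f_mpp (x : cl) : Oc R := ((((1 * x (setb false false false), 1 * x (setb false true false)), (1 * x (setb false false true), 1 * x (setb false true true))), ((1 * x (setb true false false), (-1) * x (setb true true false)), ((-1) * x (setb true false true), 1 * x (setb true true true)))) : Oc R).
Definition g_mpp (u : Oc R) : cl := [ffun A : {set 'I_3} => match i0 \in A, i1 \in A, i2 \in A with
  | false, false, false => 1 * u.1.1.1
  | true, false, false => 1 * u.2.1.1
  | false, true, false => 1 * u.1.1.2
  | false, false, true => 1 * u.1.2.1
  | true, true, false => (-1) * u.2.1.2
  | true, false, true => (-1) * u.2.2.1
  | false, true, true => 1 * u.1.2.2
  | true, true, true => 1 * u.2.2.2
  end].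
Definition img_mpp (a b c : bool) : Oc R := match a, b, c with
  | false, false, false => ((((1, 0), (0, 0)), ((0, 0), (0, 0))) : Oc R)
  | true, false, false => ((((0, 0), (0, 0)), ((1, 0), (0, 0))) : Oc R)
  | false, true, false => ((((0, 1), (0, 0)), ((0, 0), (0, 0))) : Oc R)
  | false, false, true => ((((0, 0), (1, 0)), ((0, 0), (0, 0))) : Oc R)
  | true, true, false => ((((0, 0), (0, 0)), ((0, (-1)), (0, 0))) : Oc R)
  | true, false, true => ((((0, 0), (0, 0)), ((0, 0), ((-1), 0))) : Oc R)
  | false, true, true => ((((0, 0), (0, 1)), ((0, 0), (0, 0))) : Oc R)
  | true, true, true => ((((0, 0), (0, 0)), ((0, 0), (0, 1))) : Oc R)
  end.
Lemma fb_mpp a b c : f_mpp (blade R (setb a b c)) = img_mpp a b c.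
Proof. by case: a; case: b; case: c; apply: oc_ext; rewrite /= !ffunE !eq_setb /=; ring. Qed.
Lemma iso_mpp (lam : 'I_3 -> R) : lam i0 = (-1) -> lam i1 = 1 -> lam i2 = 1 ->
  hurwitz_iso (bullet lam) (cl_one R) (cl_N lam) (omul 1) (oct_one R) (onorm 1).
Proof.
move=> l0 l1 l2; apply: (@gen_iso _ _ _ (@f_mpp) (@g_mpp)).
- by move=> a x y; apply: oc_ext; rewrite /= !ffunE /GRing.scale /=; ring.
- by move=> x; apply/ffunP; apply: set3_ind => a b c; rewrite ffunE !in_setb; case: a; case: b; case: c; rewrite /=; ring.
- by move=> [[[u1 u2][u3 u4]][[u5 u6][u7 u8]]]; apply: oc_ext; rewrite /= !ffunE !in_setb /=; ring.
- by apply: oc_ext; rewrite /= /cl_one set0_setb !ffunE !eq_setb /=; ring.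
- by move=> x; apply: oc_ext; rewrite /= !starE !eq_setb /= /r_conj /=; ring.
apply: set3_ind => a b c; apply: set3_ind => a' b' c'.
rewrite symd_setb /beta /csg /cl_sign !swaps_setb !setI_setb !prod_setb !card_setb l0 l1 l2.
rewrite !fb_mpp.
case: a; case: b; case: c; case: a'; case: b'; case: c'; rewrite /=;
  apply: oc_ext; rewrite /= /r_mul /r_conj /GRing.scale /=; ring.
Qed.

Definition f_mpm (x : cl) : Oc R := ((((1 * x (setb false false false), 1 * x (setb false true false)), ((-1) * x (setb true false true), (-1) * x (setb true true true))), ((1 * x (setb true false false), (-1) * x (setb true true false)), (1 * x (setb false false true), (-1) * x (setb false true true)))) : Oc R).
Definition g_mpm (u : Oc R) : cl := [ffun A : {set 'I_3} => match i0 \in A, i1 \in A, i2 \in A with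
  | false, false, false => 1 * u.1.1.1
  | true, false, false => 1 * u.2.1.1
  | false, true, false => 1 * u.1.1.2
  | false, false, true => 1 * u.2.2.1
  | true, true, false => (-1) * u.2.1.2
  | true, false, true => (-1) * u.1.2.1
  | false, true, true => (-1) * u.2.2.2
  | true, true, true => (-1) * u.1.2.2
  end].
Definition img_mpm (a b c : bool) : Oc R := match a, b, c with
  | false, false, false => ((((1, 0), (0, 0)), ((0, 0), (0, 0))) : Oc R)
  | true, false, false => ((((0, 0), (0, 0)), ((1, 0), (0, 0))) : Oc R)
  | false, true, false => ((((0, 1), (0, 0)), ((0, 0), (0, 0))) : Oc R)
  | false, false, true => ((((0, 0), (0, 0)), ((0, 0), (1, 0))) : Oc R)
  | true, true, false => ((((0, 0), (0, 0)), ((0, (-1)), (0, 0))) : Oc R)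
  | true, false, true => ((((0, 0), ((-1), 0)), ((0, 0), (0, 0))) : Oc R)
  | false, true, true => ((((0, 0), (0, 0)), ((0, 0), (0, (-1)))) : Oc R)
  | true, true, true => ((((0, 0), (0, (-1))), ((0, 0), (0, 0))) : Oc R)
  end.
Lemma fb_mpm a b c : f_mpm (blade R (setb a b c)) = img_mpm a b c.
Proof. by case: a; case: b; case: c; apply: oc_ext; rewrite /= !ffunE !eq_setb /=; ring. Qed.
Lemma iso_mpm (lam : 'I_3 -> R) : lam i0 = (-1) -> lam i1 = 1 -> lam i2 = (-1) ->
  hurwitz_iso (bullet lam) (cl_one R) (cl_N lam) (omul 1) (oct_one R) (onorm 1).
Proof.
move=> l0 l1 l2; apply: (@gen_iso _ _ _ (@f_mpm) (@g_mpm)).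
- by move=> a x y; apply: oc_ext; rewrite /= !ffunE /GRing.scale /=; ring.
- by move=> x; apply/ffunP; apply: set3_ind => a b c; rewrite ffunE !in_setb; case: a; case: b; case: c; rewrite /=; ring.
- by move=> [[[u1 u2][u3 u4]][[u5 u6][u7 u8]]]; apply: oc_ext; rewrite /= !ffunE !in_setb /=; ring.
- by apply: oc_ext; rewrite /= /cl_one set0_setb !ffunE !eq_setb /=; ring.
- by move=> x; apply: oc_ext; rewrite /= !starE !eq_setb /= /r_conj /=; ring.
apply: set3_ind => a b c; apply: set3_ind => a' b' c'.
rewrite symd_setb /beta /csg /cl_sign !swaps_setb !setI_setb !prod_setb !card_setb l0 l1 l2.
rewrite !fb_mpm.
case: a; case: b; case: c; case: a'; case: b'; case: c'; rewrite /=;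
  apply: oc_ext; rewrite /= /r_mul /r_conj /GRing.scale /=; ring.
Qed.

Definition f_mmp (x : cl) : Oc R := ((((1 * x (setb false false false), (-1) * x (setb true true false)), (1 * x (setb false false true), (-1) * x (setb true true true))), ((1 * x (setb true false false), 1 * x (setb false true false)), ((-1) * x (setb true false true), (-1) * x (setb false true true)))) : Oc R).
Definition g_mmp (u : Oc R) : cl := [ffun A : {set 'I_3} => match i0 \in A, i1 \in A, i2 \in A with
  | false, false, false => 1 * u.1.1.1
  | true, false, false => 1 * u.2.1.1
  | false, true, false => 1 * u.2.1.2
  | false, false, true => 1 * u.1.2.1
  | true, true, false => (-1) * u.1.1.2
  | true, false, true => (-1) * u.2.2.1
  | false, true, true => (-1) * u.2.2.2
  | true, true, true => (-1) * u.1.2.2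
  end].
Definition img_mmp (a b c : bool) : Oc R := match a, b, c with
  | false, false, false => ((((1, 0), (0, 0)), ((0, 0), (0, 0))) : Oc R)
  | true, false, false => ((((0, 0), (0, 0)), ((1, 0), (0, 0))) : Oc R)
  | false, true, false => ((((0, 0), (0, 0)), ((0, 1), (0, 0))) : Oc R)
  | false, false, true => ((((0, 0), (1, 0)), ((0, 0), (0, 0))) : Oc R)
  | true, true, false => ((((0, (-1)), (0, 0)), ((0, 0), (0, 0))) : Oc R)
  | true, false, true => ((((0, 0), (0, 0)), ((0, 0), ((-1), 0))) : Oc R)
  | false, true, true => ((((0, 0), (0, 0)), ((0, 0), (0, (-1)))) : Oc R)
  | true, true, true => ((((0, 0), (0, (-1))), ((0, 0), (0, 0))) : Oc R)
  end.
Lemma fb_mmp a b c : f_mmp (blade R (setb a b c)) = img_mmp a b c.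
Proof. by case: a; case: b; case: c; apply: oc_ext; rewrite /= !ffunE !eq_setb /=; ring. Qed.
Lemma iso_mmp (lam : 'I_3 -> R) : lam i0 = (-1) -> lam i1 = (-1) -> lam i2 = 1 ->
  hurwitz_iso (bullet lam) (cl_one R) (cl_N lam) (omul 1) (oct_one R) (onorm 1).
Proof.
move=> l0 l1 l2; apply: (@gen_iso _ _ _ (@f_mmp) (@g_mmp)).
- by move=> a x y; apply: oc_ext; rewrite /= !ffunE /GRing.scale /=; ring.
- by move=> x; apply/ffunP; apply: set3_ind => a b c; rewrite ffunE !in_setb; case: a; case: b; case: c; rewrite /=; ring.
- by move=> [[[u1 u2][u3 u4]][[u5 u6][u7 u8]]]; apply: oc_ext; rewrite /= !ffunE !in_setb /=; ring.
- by apply: oc_ext; rewrite /= /cl_one set0_setb !ffunE !eq_setb /=; ring.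
- by move=> x; apply: oc_ext; rewrite /= !starE !eq_setb /= /r_conj /=; ring.
apply: set3_ind => a b c; apply: set3_ind => a' b' c'.
rewrite symd_setb /beta /csg /cl_sign !swaps_setb !setI_setb !prod_setb !card_setb l0 l1 l2.
rewrite !fb_mmp.
case: a; case: b; case: c; case: a'; case: b'; case: c'; rewrite /=;
  apply: oc_ext; rewrite /= /r_mul /r_conj /GRing.scale /=; ring.
Qed.

Definition f_mmm (x : cl) : Oc R := ((((1 * x (setb false false false), (-1) * x (setb true true false)), ((-1) * x (setb true false true), 1 * x (setb false true true))), ((1 * x (setb true false false), 1 * x (setb false true false)), (1 * x (setb false false true), 1 * x (setb true true true)))) : Oc R).
Definition g_mmm (u : Oc R) : cl := [ffun A : {set 'I_3} => match i0 \in A, i1 \in A, i2 \in A with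
  | false, false, false => 1 * u.1.1.1
  | true, false, false => 1 * u.2.1.1
  | false, true, false => 1 * u.2.1.2
  | false, false, true => 1 * u.2.2.1
  | true, true, false => (-1) * u.1.1.2
  | true, false, true => (-1) * u.1.2.1
  | false, true, true => 1 * u.1.2.2
  | true, true, true => 1 * u.2.2.2
  end].
Definition img_mmm (a b c : bool) : Oc R := match a, b, c with
  | false, false, false => ((((1, 0), (0, 0)), ((0, 0), (0, 0))) : Oc R)
  | true, false, false => ((((0, 0), (0, 0)), ((1, 0), (0, 0))) : Oc R)
  | false, true, false => ((((0, 0), (0, 0)), ((0, 1), (0, 0))) : Oc R)
  | false, false, true => ((((0, 0), (0, 0)), ((0, 0), (1, 0))) : Oc R)
  | true, true, false => ((((0, (-1)), (0, 0)), ((0, 0), (0, 0))) : Oc R)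
  | true, false, true => ((((0, 0), ((-1), 0)), ((0, 0), (0, 0))) : Oc R)
  | false, true, true => ((((0, 0), (0, 1)), ((0, 0), (0, 0))) : Oc R)
  | true, true, true => ((((0, 0), (0, 0)), ((0, 0), (0, 1))) : Oc R)
  end.
Lemma fb_mmm a b c : f_mmm (blade R (setb a b c)) = img_mmm a b c.
Proof. by case: a; case: b; case: c; apply: oc_ext; rewrite /= !ffunE !eq_setb /=; ring. Qed.
Lemma iso_mmm (lam : 'I_3 -> R) : lam i0 = (-1) -> lam i1 = (-1) -> lam i2 = (-1) ->
  hurwitz_iso (bullet lam) (cl_one R) (cl_N lam) (omul 1) (oct_one R) (onorm 1).
Proof.
move=> l0 l1 l2; apply: (@gen_iso _ _ _ (@f_mmm) (@g_mmm)).
- by move=> a x y; apply: oc_ext; rewrite /= !ffunE /GRing.scale /=; ring.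
- by move=> x; apply/ffunP; apply: set3_ind => a b c; rewrite ffunE !in_setb; case: a; case: b; case: c; rewrite /=; ring.
- by move=> [[[u1 u2][u3 u4]][[u5 u6][u7 u8]]]; apply: oc_ext; rewrite /= !ffunE !in_setb /=; ring.
- by apply: oc_ext; rewrite /= /cl_one set0_setb !ffunE !eq_setb /=; ring.
- by move=> x; apply: oc_ext; rewrite /= !starE !eq_setb /= /r_conj /=; ring.
apply: set3_ind => a b c; apply: set3_ind => a' b' c'.
rewrite symd_setb /beta /csg /cl_sign !swaps_setb !setI_setb !prod_setb !card_setb l0 l1 l2.
rewrite !fb_mmm.
case: a; case: b; case: c; case: a'; case: b'; case: c'; rewrite /=;
  apply: oc_ext; rewrite /= /r_mul /r_conj /GRing.scale /=; ring.
Qed.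


Lemma m1neq1 : ((-1 : R) == 1) = false.
Proof. by apply/negbTE/eqP => H; lra. Qed.
Lemma cardlam (lam : 'I_3 -> R) : #|[set i | lam i == 1]| = ((lam i0 == 1%R) + (lam i1 == 1%R) + (lam i2 == 1%R))%N.
Proof.
have -> : [set i | lam i == 1] = setb (lam i0 == 1) (lam i1 == 1) (lam i2 == 1).
  apply/setP => i; rewrite inE in_setb.
  by case: i => [[|[|[|n]]] Hi] //=; congr (lam _ == 1); apply: val_inj.
by rewrite card_setb.
Qed.
End C.

Theorem mainTheorem5 (R : realType) (p q : nat) (lam : 'I_3 -> R) :
  (p + q = 3)%N ->
  (forall i, lam i = 1 \/ lam i = -1) ->
  #|[set i | lam i == 1]| = p ->
  ((p, q) = (3, 0)%N ->
     hurwitz_iso (bullet lam) (cl_one R) (cl_N lam)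
                 (@oct_mul R) (oct_one R) (@oct_norm R))
  /\
  ((p, q) \in [:: (2, 1); (1, 2); (0, 3)]%N ->
     hurwitz_iso (bullet lam) (cl_one R) (cl_N lam)
                 (@soct_mul R) (oct_one R) (@soct_norm R)).
Proof.
move=> Hpq Hl; rewrite cardlam => Hc.
have q3 : q = (3 - p)%N by rewrite -Hpq addKn.
subst q.
case: (Hl i0) => l0; case: (Hl i1) => l1; case: (Hl i2) => l2;
  rewrite l0 l1 l2 ?eqxx ?m1neq1 /= in Hc; subst p; split => //= _.
- exact: (iso_ppp l0 l1 l2).
- exact: (iso_ppm l0 l1 l2).
- exact: (iso_pmp l0 l1 l2).
- exact: (iso_pmm l0 l1 l2).
- exact: (iso_mpp l0 l1 l2).
- exact: (iso_mpm l0 l1 l2).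
- exact: (iso_mmp l0 l1 l2).
- exact: (iso_mmm l0 l1 l2).
Qed.
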